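(* Let $A$ and $B$ be commutative associative unital algebras over $\mathbb{C}$ or $\mathbb{R}$, let $\mathbf{f}_1,\dots,\mathbf{f}_r\colon A\to B$ be unital algebra homomorphisms, and let $n_1,\dots,n_r\in\mathbb{Z}$. Put $\mathbf{f}=\sum_{\alpha}n_\alpha\mathbf{f}_\alpha$, $p=\sum_{n_\alpha>0}n_\alpha$ and $q=-\sum_{n_\alpha<0}n_\alpha$. Then $\mathbf{f}$ is a $p|q$-homomorphism, with $\mathbf{f}(1)=\sum_\alpha n_\alpha=p-q$.
   Context: For a linear map $\mathbf{f}\colon A\to B$, its characteristic function is the formal power series $R(\mathbf{f},a,z)=\exp\bigl(\mathbf{f}(\ln(1+az))\bigr)\in B[[z]]$, where $\ln(1+az)=\sum_{k\ge1}(-1)^{k-1}a^kz^k/k$ and $\mathbf{f}$ is applied coefficientwise. A linear map $\mathbf{f}$ is called a $p|q$-homomorphism if for every $a\in A$, $R(\mathbf{f},a,z)$ is a rational function of $z$ representable as a ratio $P_a(z)/Q_a(z)$ of polynomials $P_a,Q_a\in B[z]$ of degrees $p$ and $q$ respectively, with $Q_a(0)=1$ (the ratio understood as a formal power series). *)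

(* Defs.v *)
From HB Require Import structures.
From mathcomp Require Import all_boot all_order all_algebra.
Set Implicit Arguments. Unset Strict Implicit. Unset Printing Implicit Defensive.
Import Order.TTheory GRing.Theory Num.Theory.
Local Open Scope ring_scope.

(* Formal power series B[[z]] are represented by their coefficient
   sequences nat -> B. *)
Section PowerSeries.
Variables (K : numFieldType) (B : comAlgType K).

Definition fps_mul (s t : nat -> B) : nat -> B :=
  fun n => \sum_(i < n.+1) s i * t (n - i)%N.

Definition fps_one : nat -> B := fun n => if n is 0%N then 1 else 0.

Fixpoint fps_pow (s : nat -> B) (k : nat) : nat -> B :=
  if k is k'.+1 then fps_mul s (fps_pow s k') else fps_one.

(* exp(g) = sum_k g^k / k!, for a series g with zero constant term
   (the coefficient of z^n only receives contributions from k <= n). *)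
Definition fps_exp (g : nat -> B) : nat -> B :=
  fun n => \sum_(k < n.+1) ((k`!)%:R : K)^-1 *: fps_pow g k n.

Definition fps_of_poly (P : {poly B}) : nat -> B := fun n => P`_n.
End PowerSeries.

Definition fps_ln1p (K : numFieldType) (A : comAlgType K) (a : A) : nat -> A :=
  fun k => if k is 0%N then 0 else (((-1) ^+ k.-1 / k%:R : K) *: a ^+ k).

Definition charfun (K : numFieldType) (A B : comAlgType K) (f : A -> B) (a : A)
  : nat -> B :=
  fps_exp (fun k => f (fps_ln1p a k)).

(* f is a p|q-homomorphism: a linear map such that for every a,
   R(f,a,z) = P_a(z)/Q_a(z) with deg P_a <= p, deg Q_a <= q, Q_a(0) = 1;
   the ratio is understood in B[[z]], i.e. R(f,a,z) * Q_a(z) = P_a(z). *)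
Definition pq_hom (K : numFieldType) (A B : comAlgType K) (f : A -> B)
  (p q : nat) : Prop :=
  linear f /\
  forall a : A, exists P Q : {poly B},
    [/\ (size P <= p.+1)%N, (size Q <= q.+1)%N, Q`_0 = 1 &
        forall n, fps_mul (charfun f a) (fps_of_poly Q) n = P`_n].

(* Main.v *)
Require Import Defs.
From HB Require Import structures.
From mathcomp Require Import all_boot all_order all_algebra.
From mathcomp Require Import zify.
Import Order.TTheory GRing.Theory Num.Theory.
Local Open Scope ring_scope.

Section Aux.
Variables (K : numFieldType) (B : comAlgType K).
Implicit Types (p q P Q G H U Y Z : {poly B}).

Definition eqm (m : nat) p q := forall j, (j < m)%N -> p`_j = q`_j.

Lemma eqm_refl m p : eqm m p p. Proof. by []. Qed.
Lemma eqm_sym m p q : eqm m p q -> eqm m q p.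
Proof. by move=> h j hj; rewrite h. Qed.
Lemma eqm_trans m p q r : eqm m p q -> eqm m q r -> eqm m p r.
Proof. by move=> h1 h2 j hj; rewrite h1 // h2. Qed.
Arguments eqm_trans {m p q r}. Arguments eqm_sym {m p q}.
Lemma eqmD m p p' q q' : eqm m p p' -> eqm m q q' -> eqm m (p + q) (p' + q').
Proof. by move=> h1 h2 j hj; rewrite !coefD h1 // h2. Qed.
Lemma eqmM m p p' q q' : eqm m p p' -> eqm m q q' -> eqm m (p * q) (p' * q').
Proof.
move=> h1 h2 j hj; rewrite !coefM; apply: eq_bigr => i _.
have hi : (i < m)%N by apply: leq_ltn_trans hj; rewrite -ltnS.
rewrite h1 // h2 //; apply: leq_ltn_trans hj; exact: leq_subr.
Qed.
Lemma eqmX m p q k : eqm m p q -> eqm m (p ^+ k) (q ^+ k).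
Proof.
move=> h; elim: k => [|k IH]; first exact: eqm_refl.
by rewrite !exprS; apply: eqmM.
Qed.
Lemma eqm_prod m (I : Type) (r : seq I) (Pr : pred I) (F1 F2 : I -> {poly B}) :
  (forall i, Pr i -> eqm m (F1 i) (F2 i)) ->
  eqm m (\prod_(i <- r | Pr i) F1 i) (\prod_(i <- r | Pr i) F2 i).
Proof.
move=> h; apply: (big_rec2 (fun x y => eqm m x y)); first exact: eqm_refl.
by move=> i y1 y2 Pi hy; apply: eqmM => //; apply: h.
Qed.

Lemma nat_scale_inj (k : nat) (x : B) : x *+ k.+1 = 0 -> x = 0.
Proof.
move=> h.
have hk : (k.+1%:R : K) != 0 by rewrite pnatr_eq0.
by rewrite -[x]scale1r -(mulVf hk) -scalerA scaler_nat h scaler0.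
Qed.

Lemma ode_uniq n U Y Z : Y`_0 = Z`_0 -> eqm n Y^`() (U * Y) -> eqm n Z^`() (U * Z) ->
  eqm n.+1 Y Z.
Proof.
move=> h0 hY hZ.
suff: forall j, (j <= n)%N -> forall i, (i <= j)%N -> (Y - Z)`_i = 0.
  by move=> H j hj; apply/eqP; rewrite -subr_eq0 -coefB (H j hj j).
elim=> [|j IH] hj i hi.
  by move: hi; rewrite leqn0 => /eqP->; rewrite coefB h0 subrr.
move: hi; rewrite leq_eqVlt => /orP[/eqP->|hi]; last by apply: IH => //; apply: ltnW.
have hjn : (j < n)%N by [].
apply: (@nat_scale_inj j).
have -> : (Y - Z)`_j.+1 *+ j.+1 = (Y - Z)^`()`_j by rewrite coef_deriv.
rewrite derivB coefB hY // hZ // -coefB -mulrBr coefM big1 // => t _.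
by rewrite (IH (ltnW hjn)) ?mulr0 // leq_subr.
Qed.

Definition cfac (k : nat) : B := ((k`!)%:R^-1 : K) *: (1 : B).

Definition Exp (n : nat) G : {poly B} := \sum_(k < n.+1) cfac k *: G ^+ k.

Lemma expX_low G k i : G`_0 = 0 -> (i < k)%N -> (G ^+ k)`_i = 0.
Proof.
move=> G0; elim: k i => [|k IH] i //.
move=> hi; rewrite exprS coefM big1 // => j _.
case: j => [[|j] hj] /=; first by rewrite G0 mul0r.
rewrite IH ?mulr0 //.
by move: hi; lia.
Qed.

Lemma cfacS k : cfac k.+1 *+ k.+1 = cfac k.
Proof.
rewrite /cfac scalerMnl; congr (_ *: _).
have hk : (k.+1%:R : K) != 0 by rewrite pnatr_eq0.
by rewrite factS natrM invfM -mulr_natr mulrAC mulVf // mul1r.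
Qed.

Lemma cfac0 : cfac 0 = 1.
Proof. by rewrite /cfac fact0 invr1 scale1r. Qed.

Lemma Exp_coef0 n G : G`_0 = 0 -> (Exp n G)`_0 = 1.
Proof.
move=> G0; rewrite /Exp coef_sum big_ord_recl /= expr0 coefZ coef1 /= mulr1 cfac0.
by rewrite big1 ?addr0 // => i _; rewrite coefZ expX_low ?mulr0.
Qed.

Lemma Exp_ode n G : G`_0 = 0 -> eqm n (Exp n G)^`() (G^`() * Exp n G).
Proof.
move=> G0.
have -> : (Exp n G)^`() = G^`() * \sum_(k < n) cfac k *: G ^+ k.
  rewrite /Exp raddf_sum big_ord_recl /= derivZ expr0 derivC scaler0 add0r.
  rewrite mulr_sumr; apply: eq_bigr => i _.
  by rewrite derivZ deriv_exp /= -scalerMnr scalerMnl cfacS scalerAr.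
have -> : Exp n G = \sum_(k < n) cfac k *: G ^+ k + cfac n *: G ^+ n.
  by rewrite /Exp big_ord_recr.
rewrite mulrDr => j hj.
rewrite coefD [X in _ = _ + X]coefM [X in _ = _ + X]big1 ?addr0 // => i _.
by rewrite coefZ expX_low ?mulr0 //; apply: leq_ltn_trans hj; apply: leq_subr.
Qed.

Lemma Exp0 n : Exp n 0 = 1.
Proof.
rewrite /Exp big_ord_recl /= expr0 cfac0 scale1r big1 ?addr0 // => i _.
by rewrite expr0n /= scaler0.
Qed.

Lemma ExpD n G H : G`_0 = 0 -> H`_0 = 0 ->
  eqm n.+1 (Exp n (G + H)) (Exp n G * Exp n H).
Proof.
move=> G0 H0.
have GH0 : (G + H)`_0 = 0 by rewrite coefD G0 H0 addr0.
apply: (@ode_uniq n (G + H)^`()).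
- by rewrite coef0M !Exp_coef0 // mulr1.
- exact: Exp_ode.
rewrite derivM.
apply: (@eqm_trans _ _ (G^`() * Exp n G * Exp n H + Exp n G * (H^`() * Exp n H))).
  by apply: eqmD; apply: eqmM; (apply: eqm_refl || apply: Exp_ode).
move=> j _; rewrite derivD; congr (_`_j).
by rewrite mulrDl mulrA !mulrA [Exp n G * H^`()]mulrC.
Qed.

Lemma Exp_sum n (I : Type) (r : seq I) (Pr : pred I) (F : I -> {poly B}) :
  (forall i, (F i)`_0 = 0) ->
  eqm n.+1 (Exp n (\sum_(i <- r | Pr i) F i)) (\prod_(i <- r | Pr i) Exp n (F i)).
Proof.
move=> hF.
suff [] : (\sum_(i <- r | Pr i) F i)`_0 = 0 /\
  eqm n.+1 (Exp n (\sum_(i <- r | Pr i) F i)) (\prod_(i <- r | Pr i) Exp n (F i)) by [].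
elim/big_rec2: _ => [|i x y _ [hx hxy]]; first by rewrite coef0 Exp0; split => //; apply: eqm_refl.
 split; first by rewrite coefD hF hx addr0.
apply: eqm_trans (@ExpD n _ _ (hF i) hx) _.
by apply: eqmM => //; apply: eqm_refl.
Qed.

Lemma Exp_muln n G k : G`_0 = 0 -> eqm n.+1 (Exp n (G *+ k)) (Exp n G ^+ k).
Proof.
move=> G0; elim: k => [|k IH]; first by rewrite mulr0n Exp0 expr0.
have hk : (G *+ k)`_0 = 0 by rewrite coefMn G0 mul0rn.
rewrite mulrS exprS; apply: eqm_trans (@ExpD n _ _ G0 hk) _.
by apply: eqmM => //; apply: eqm_refl.
Qed.

Lemma Exp_neg n G : G`_0 = 0 -> eqm n.+1 (Exp n (- G) * Exp n G) 1.
Proof.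
move=> G0.
have hN : (- G)`_0 = 0 by rewrite coefN G0 oppr0.
apply: eqm_trans (eqm_sym (@ExpD n _ _ hN G0)) _.
by rewrite addNr Exp0; apply: eqm_refl.
Qed.

Definition Yb (b : B) : {poly B} := 1 + b *: 'X.
Definition Lb n (b : B) : {poly B} := \poly_(k < n.+1) fps_ln1p b k.

Lemma Lb0 n b : (Lb n b)`_0 = 0.
Proof. by rewrite /Lb coef_poly. Qed.

Lemma Lb_deriv n b j : (j < n)%N -> (Lb n b)^`()`_j = ((-1) ^+ j : K) *: b ^+ j.+1.
Proof.
move=> hj; rewrite coef_deriv /Lb coef_poly ltnS hj /= scalerMnl.
have hk : (j.+1%:R : K) != 0 by rewrite pnatr_eq0.
by rewrite -mulr_natr mulfVK.
Qed.

Lemma Exp_ln n b : eqm n.+1 (Exp n (Lb n b)) (Yb b).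
Proof.
apply: (@ode_uniq n (Lb n b)^`()).
- by rewrite Exp_coef0 ?Lb0 // /Yb coefD coef1 coefZ coefX /= mulr0 addr0.
- by apply: Exp_ode; apply: Lb0.
move=> j hj.
rewrite /Yb derivD derivC derivZ derivX add0r mulrDr mulr1 -scalerAr.
rewrite coefD !coefZ coefMX coef1 Lb_deriv //.
case: j hj => [|j] hj /=; first by rewrite expr0 scale1r expr1 mulr1 mulr0 addr0.
rewrite mulr0 Lb_deriv ?(ltnW hj) //.
by rewrite -scalerAr -exprS exprS mulN1r scaleNr addNr.
Qed.

Definition Pf (b : B) (N : int) : {poly B} := if (0 < N) then Yb b ^+ absz N else 1.
Definition Qf (b : B) (N : int) : {poly B} := if (N < 0) then Yb b ^+ absz N else 1.

Lemma Exp_ln_pow n b k : eqm n.+1 (Exp n (Lb n b *+ k)) (Yb b ^+ k).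
Proof.
apply: eqm_trans (@Exp_muln n _ k (Lb0 n b)) _.
by apply: eqmX; apply: Exp_ln.
Qed.

Lemma factor n b N : eqm n.+1 (Exp n (Lb n b *~ N) * Qf b N) (Pf b N).
Proof.
case: N => k.
  have -> : Pf b (Posz k) = Yb b ^+ k by rewrite /Pf; case: k.
  rewrite /Qf /= mulr1; exact: Exp_ln_pow.
rewrite /Pf /Qf /= NegzE mulrNz.
have hG : (Lb n b *~ k.+1)`_0 = 0 by rewrite coefMrz Lb0 mul0rz.
apply: eqm_trans _ (@Exp_neg n _ hG).
by apply: eqmM; [apply: eqm_refl | apply: eqm_sym; apply: Exp_ln_pow].
Qed.

Lemma size_Yb b : (size (Yb b) <= 2)%N.
Proof.
apply: leq_trans (size_polyD _ _) _; rewrite size_poly1 geq_max /=.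
by apply: leq_trans (size_scale_leq _ _) _; rewrite size_polyX.
Qed.

Lemma size_Pf b N : (size (Pf b N) <= (if (0 < N)%R then absz N else 0%N).+1)%N.
Proof.
rewrite /Pf; case: ifP => _; last by rewrite size_poly1.
apply: leq_trans (size_poly_exp_leq _ _) _.
have h : ((size (Yb b)).-1 <= 1)%N.
  by move: (size_Yb b); case: (size _).
by rewrite ltnS; apply: leq_trans (leq_mul h (leqnn _)) _; rewrite mul1n.
Qed.

Lemma coef0_pow1 p k : p`_0 = 1 -> (p ^+ k)`_0 = 1.
Proof.
move=> h; elim: k => [|k IH]; first by rewrite expr0 coef1.
by rewrite exprS coef0M h IH mulr1.
Qed.

Lemma Qf0 b N : (Qf b N)`_0 = 1.
Proof.
rewrite /Qf; case: ifP => _; last by rewrite coef1.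
by apply: coef0_pow1; rewrite /Yb coefD coef1 coefZ coefX mulr0 addr0.
Qed.

Lemma fps_pow_coef (g : nat -> B) m k i : (i < m)%N ->
  fps_pow g k i = ((\poly_(j < m) g j) ^+ k)`_i.
Proof.
elim: k i => [|k IH] i hi /=.
  by rewrite expr0 coef1 /fps_one; case: i hi.
rewrite exprS coefM /fps_mul; apply: eq_bigr => j _.
have hj : (j < m)%N by apply: leq_ltn_trans hi; rewrite -ltnS.
rewrite coef_poly hj IH //; apply: leq_ltn_trans hi; exact: leq_subr.
Qed.

Lemma fps_exp_coef (g : nat -> B) n i : g 0%N = 0 -> (i <= n)%N ->
  fps_exp g i = (Exp n (\poly_(j < n.+1) g j))`_i.
Proof.
move=> g0 hi.
have G0 : (\poly_(j < n.+1) g j)`_0 = 0 by rewrite coef_poly.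
rewrite /fps_exp /Exp coef_sum (big_ord_widen n.+1 (fun k => ((k`!)%:R : K)^-1 *: fps_pow g k i)) //.
rewrite big_mkcond; apply: eq_bigr => k _.
rewrite coefZ /cfac -scalerAl mul1r (@fps_pow_coef g n.+1) ?ltnS //.
case: ifP => // /negbT; rewrite -ltnNge => hk.
by rewrite expX_low ?scaler0.
Qed.

Lemma size_prod_le (I : Type) (r : seq I) (F : I -> {poly B}) (d : I -> nat) :
  (forall i, size (F i) <= (d i).+1)%N ->
  (size (\prod_(i <- r) F i)%R <= (\sum_(i <- r) d i).+1)%N.
Proof.
move=> h; elim: r => [|x r IH]; first by rewrite !big_nil size_poly1.
rewrite !big_cons; apply: leq_trans (size_polyMleq _ _) _.
move: (h x) IH; set a := size (F x); set c := size _; move=> h1 h2; lia.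
Qed.

Lemma size_Qf b N : (size (Qf b N) <= (if (N < 0)%R then absz N else 0%N).+1)%N.
Proof.
rewrite /Qf; case: ifP => _; last by rewrite size_poly1.
apply: leq_trans (size_poly_exp_leq _ _) _.
have h : ((size (Yb b)).-1 <= 1)%N.
  by move: (size_Yb b); case: (size _).
by rewrite ltnS; apply: leq_trans (leq_mul h (leqnn _)) _; rewrite mul1n.
Qed.
End Aux.
Arguments eqm {K B}.
Arguments Exp {K B}.
Arguments Lb {K B}.
Arguments Pf {K B}.
Arguments Qf {K B}.
Arguments size_Pf {K B}.
Arguments size_Qf {K B}.
Arguments size_prod_le {K B}.
Arguments Qf0 {K B}.
Arguments factor {K B}.
Arguments Exp_sum {K B}.
Arguments fps_exp_coef {K B}.
Arguments eqmM {K B}.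
Arguments eqm_refl {K B}.
Arguments eqm_prod {K B}.

Theorem mainTheorem4 (K : numFieldType) (A B : comAlgType K) (r : nat)
  (F : 'I_r -> {lrmorphism A -> B}) (N : 'I_r -> int) :
  let f := fun x : A => \sum_(i < r) (F i x) *~ N i in
  let p := (\sum_(i < r | (0 < N i)%R) absz (N i))%N in
  let q := (\sum_(i < r | (N i < 0)%R) absz (N i))%N in
  pq_hom f p q /\ f 1 = (\sum_(i < r) N i)%:~R /\ f 1 = (p%:Z - q%:Z)%:~R.
Proof.
move=> f p q.
have f1 : f 1 = (\sum_(i < r) N i)%:~R.
  by rewrite /f mulrz_sumr; apply: eq_bigr => i _; rewrite rmorph1.
have hpq : \sum_(i < r) N i = p%:Z - q%:Z.
  have -> : p%:Z = \sum_(i < r) (if (0 < N i)%R then absz (N i) else 0%N)%:Z.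
    by rewrite /p big_mkcond; exact: (big_morph Posz PoszD (erefl _)).
  have -> : q%:Z = \sum_(i < r) (if (N i < 0)%R then absz (N i) else 0%N)%:Z.
    by rewrite /q big_mkcond; exact: (big_morph Posz PoszD (erefl _)).
  rewrite -sumrB; apply: eq_bigr => i _.
  by case: (N i) => k /=; [rewrite subr0; case: k | rewrite NegzE sub0r].
split; last by split => //; rewrite f1 hpq.
split.
  move=> c x y; rewrite /f scaler_sumr -big_split /=; apply: eq_bigr => i _.
  by rewrite linearP /= mulrzDl scalerMzr.
move=> a.
pose b i := F i a.
exists (\prod_(i < r) Pf (b i) (N i)), (\prod_(i < r) Qf (b i) (N i)).
split.
- have -> : p = (\sum_(i < r) (if (0 < N i)%R then absz (N i) else 0))%N.
    by rewrite /p big_mkcond.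
  apply: size_prod_le => i; apply: size_Pf.
- have -> : q = (\sum_(i < r) (if (N i < 0)%R then absz (N i) else 0))%N.
    by rewrite /q big_mkcond.
  apply: size_prod_le => i; apply: size_Qf.
- apply: (big_ind (fun P : {poly B} => P`_0 = 1)); first by rewrite coef1.
    by move=> x y hx hy; rewrite coef0M hx hy mulr1.
  by move=> i _; apply: Qf0.
move=> n.
set g := fun k => f (fps_ln1p a k).
have g0 : g 0%N = 0 by rewrite /g /f /= big1 // => i _; rewrite raddf0 mul0rz.
have hG : \poly_(j < n.+1) g j = \sum_(i < r) Lb n (b i) *~ N i.
  apply/polyP => k; rewrite coef_poly coef_sum.
  under [RHS]eq_bigr do rewrite coefMrz /Lb coef_poly.
  case: ifP => _; last by rewrite big1 // => i _; rewrite mul0rz.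
  rewrite /g /f; apply: eq_bigr => i _; congr (_ *~ _).
  case: k => [|k] /=; first by rewrite raddf0.
  by rewrite linearZ /= rmorphXn.
have E1 : eqm n.+1 (Exp n (\poly_(j < n.+1) g j) * \prod_(i < r) Qf (b i) (N i))
                    (\prod_(i < r) Pf (b i) (N i)).
  rewrite hG.
  apply: (@eqm_trans _ _ _ _ ((\prod_(i < r) Exp n (Lb n (b i) *~ N i)) * \prod_(i < r) Qf (b i) (N i))).
    apply: eqmM; last exact: eqm_refl.
    by apply: Exp_sum => i; rewrite coefMrz Lb0 mul0rz.
  rewrite -big_split /=; apply: eqm_prod => i _; exact: factor.
rewrite -(E1 n (ltnSn n)) coefM /fps_mul /charfun -/g.
apply: eq_bigr => i _; rewrite /fps_of_poly.
by rewrite (@fps_exp_coef _ _ g n) // -ltnS.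
Qed.
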